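(* The objects of the Quillen category $\mathcal{A}_p(S)$ (i.e. the elementary abelian subgroups of $S$) are exactly the elements of the disjoint union of the sets $\mathcal{C}(L)$ for $L \in \mathcal{L}$.
   Context: Conventions: for a group $G$ acting on the right on an additive abelian group $M$, $Z^n(G,M)$, $B^n(G,M)$ are the normalised cocycles and coboundaries; for $\tau \in Z^2(G,M)$, $\mathrm{Ext}(\tau)$ is $G\times M$ with $(g,m)(h,n) = (gh, m^h+n+\tau(g,h))$. Setting: $p$ prime, $S$ an infinite pro-$p$-group of finite coclass, $T = \gamma_\ell(S)$ for $\ell$ large enough so that $T \cong \mathbb{Z}_p^d$, $P = S/T$ is a finite $p$-group and the series $T_0 = T$, $T_{i+1}=[T_i,S]$ has all indices $p$. $T$ is written additively as a $P$-module by conjugation, and $S$ is identified with $\mathrm{Ext}(\rho)$ for some $\rho \in Z^2(P,T)$, with $\epsilon: S \to P$, $(w,t)\mapsto w$, and $T$ identified with $\{(1,t)\}$. For $L \leq P$ let $\overline{L} = \epsilon^{-1}(L)$. Let $\mathcal{L}$ be the set of elementary abelian subgroups $L \leq P$ such that the restriction $\rho_L$ lies in $B^2(L,T)$ (equivalently $\overline{L}$ splits over $T$). For $L \in \mathcal{L}$ fix a complement $C_L = \{c_L(l) \mid l \in L\}$ to $T$ in $\overline{L}$, with $c_L(l) = (l, t_L(l))$. For $\delta \in Z^1(L,T)$ put $C_L(\delta) = \{(l, t_L(l)+\delta(l)) \mid l \in L\}$ and $\mathcal{C}(L) = \{ C_L(\delta) \mid \delta \in Z^1(L,T)\}$. The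 Quillen category $\mathcal{A}_p(S)$ has as objects the elementary abelian subgroups of $S$ and as morphisms the injective homomorphisms induced by conjugation in $S$. *)

(* Defs.v *)
From mathcomp Require Import all_boot all_order all_algebra all_fingroup all_solvable.
Set Implicit Arguments. Unset Strict Implicit. Unset Printing Implicit Defensive.
Import GRing.Theory.

(* Setting: P = S/T a finite p-group (a group in a finGroupType gT),
   T an additive abelian group (zmodType) with a right P-action
   [act t g] = t^g, rho a normalised 2-cocycle, S = Ext(rho) realised
   on pairs (g, t) with g in P. Subsets of S are predicates on gT * T. *)

Section Ext.
Variables (gT : finGroupType) (T : zmodType).
Variable act : T -> gT -> T.
Variable rho : gT -> gT -> T.

Local Open Scope ring_scope.

Definition is_right_module (P : {set gT}) : Prop :=
  [/\ forall t, act t 1%g = t,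
      forall t g h, g \in P -> h \in P -> act t (g * h)%g = act (act t g) h
    & forall s t g, g \in P -> act (s + t) g = act s g + act t g].

(* normalised 2-cocycles for the multiplication
   (g,m)(h,n) = (gh, m^h + n + rho(g,h)) *)
Definition is_Z2 (P : {set gT}) : Prop :=
  [/\ forall g, g \in P -> rho 1%g g = 0,
      forall g, g \in P -> rho g 1%g = 0
    & forall g h k, g \in P -> h \in P -> k \in P ->
        act (rho g h) k + rho (g * h)%g k = rho h k + rho g (h * k)%g].

Definition in_B2 (L : {set gT}) : Prop :=
  exists f : gT -> T, f 1%g = 0 /\
    forall l m, l \in L -> m \in L -> rho l m = f (l * m)%g - act (f l) m - f m.

Definition is_Z1 (L : {set gT}) (d : gT -> T) : Prop :=
  d 1%g = 0 /\ forall l m, l \in L -> m \in L -> d (l * m)%g = act (d l) m + d m.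

Definition ext_one : gT * T := (1%g, 0).
Definition ext_mul (x y : gT * T) : gT * T :=
  ((x.1 * y.1)%g, act x.2 y.1 + y.2 + rho x.1 y.1).
Definition ext_inv (x : gT * T) : gT * T :=
  ((x.1)^-1%g, - act x.2 (x.1)^-1%g - rho x.1 (x.1)^-1%g).
Definition ext_exp (x : gT * T) (n : nat) : gT * T := iter n (ext_mul x) ext_one.

Definition Sset := gT * T -> Prop.

Definition ext_subgroup (P : {set gT}) (E : Sset) : Prop :=
  [/\ forall x, E x -> x.1 \in P,
      E ext_one,
      forall x y, E x -> E y -> E (ext_mul x y)
    & forall x, E x -> E (ext_inv x)].

Definition ext_elem_abelian (p : nat) (P : {set gT}) (E : Sset) : Prop :=
  [/\ ext_subgroup P E,
      forall x y, E x -> E y -> ext_mul x y = ext_mul y x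
    & forall x, E x -> ext_exp x p = ext_one].

(* E is a complement to T = {(1,t)} in Lbar = epsilon^{-1}(L) *)
Definition complement_T (P L : {set gT}) (E : Sset) : Prop :=
  [/\ ext_subgroup P E,
      forall x, E x -> x.1 \in L,
      forall t, E (1%g, t) -> t = 0
    & forall l, l \in L -> exists t, E (l, t)].

Definition in_calL (p : nat) (P L : {set gT}) : Prop :=
  [/\ L \subset P, (p.-abelem L)%g & in_B2 L].

Definition C_L (L : {set gT}) (tL : gT -> T) (d : gT -> T) : Sset :=
  fun x => x.1 \in L /\ x.2 = tL x.1 + d x.1.

End Ext.

(* Main.v *)
Require Import Defs.
From mathcomp Require Import all_boot all_order all_algebra all_fingroup all_solvable.
From Stdlib Require Import ClassicalEpsilon FunctionalExtensionality PropExtensionality.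
Import GRing.Theory.
Set Implicit Arguments. Unset Strict Implicit.
Local Open Scope ring_scope.

Lemma act0 (gT : finGroupType) (P : {group gT}) (T : zmodType) (act : T -> gT -> T) g :
  is_right_module act P -> g \in P -> act 0 g = 0.
Proof.
case=> _ _ hadd Hg; apply: (addrI (act 0 g)); by rewrite -hadd // !addr0.
Qed.

Lemma actN (gT : finGroupType) (P : {group gT}) (T : zmodType) (act : T -> gT -> T) g t :
  is_right_module act P -> g \in P -> act (- t) g = - act t g.
Proof.
move=> hm Hg; have [_ _ hadd] := hm.
apply: (addrI (act t g)); by rewrite -hadd // !subrr (act0 hm).
Qed.

Lemma ext_exp1 (gT : finGroupType) (T : zmodType) (act : T -> gT -> T) rho x n :
  (ext_exp act rho x n).1 = (x.1 ^+ n)%g.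
Proof. elim: n => [//|n IH]; by rewrite expgS -IH. Qed.

Lemma ext_expT (gT : finGroupType) (T : zmodType) (act : T -> gT -> T) rho u n :
  rho 1%g 1%g = 0 -> act u 1%g = u ->
  ext_exp act rho (1%g, u) n = (1%g, u *+ n).
Proof.
move=> h1 h2; elim: n => [//|n IH].
rewrite /ext_exp /= -/(ext_exp _ _ _ _) IH /ext_mul /= mulg1 h1 h2 addr0 mulrS //.
Qed.

Lemma ext_exp_in (gT : finGroupType) (P : {set gT}) (T : zmodType) (act : T -> gT -> T) rho E x n :
  ext_subgroup act rho P E -> E x -> E (ext_exp act rho x n).
Proof.
case=> _ h1 hm _ Ex; elim: n => [//|n IH]; exact: hm.
Qed.

Lemma tL_props (gT : finGroupType) (P L : {group gT}) (T : zmodType) (act : T -> gT -> T) rho tL0 :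
  complement_T act rho P L (C_L L tL0 (fun _ => 0)) ->
  tL0 1%g = 0 /\
  (forall l m, l \in L -> m \in L -> tL0 (l * m)%g = act (tL0 l) m + tL0 m + rho l m).
Proof.
case=> [[_ h1 hmul _] hL hT _]; split.
  by apply: hT; split; rewrite ?group1 ?addr0.
move=> l m Hl Hm.
have := hmul (l, tL0 l) (m, tL0 m).
rewrite /C_L /ext_mul /= !addr0 => /(_ (conj Hl erefl) (conj Hm erefl)) [_ ->] //.
Qed.

Lemma converse (gT : finGroupType) (p : nat) (P L : {group gT}) (T : zmodType)
  (act : T -> gT -> T) rho tL0 d :
  prime p -> is_right_module act P ->
  L \subset P -> (p.-abelem L)%g ->
  complement_T act rho P L (C_L L tL0 (fun _ => 0)) ->
  is_Z1 act L d -> ext_elem_abelian act rho p P (C_L L tL0 d).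
Proof.
move=> pp hm sLP abL hc [d1 dm].
have [t1 tm] := tL_props hc.
have [_ _ hadd] := hm.
have sub : ext_subgroup act rho P (C_L L tL0 d).
  split.
  - by move=> x [Hx _]; exact: (subsetP sLP).
  - by rewrite /C_L /ext_one /= group1 t1 d1 addr0.
  - move=> [l a] [m b] [/= Hl ->] [/= Hm ->]; rewrite /C_L /ext_mul /=.
    split; first by rewrite groupM.
    rewrite tm // dm // hadd ?(subsetP sLP) //.
    rewrite -!addrA; congr (_ + _); rewrite addrC -!addrA; congr (_ + _).
    by rewrite addrC -!addrA; congr (_ + _); rewrite addrC.
  - move=> [l a] [/= Hl ->]; rewrite /C_L /ext_inv /=.
    split; first by rewrite groupV.
    have Hl' : l^-1%g \in L by rewrite groupV.
    have := tm _ _ Hl Hl'; have := dm _ _ Hl Hl'.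
    rewrite mulgV t1 d1 => e1 e2.
    have -> : tL0 l^-1%g = - act (tL0 l) l^-1%g - rho l l^-1%g.
      by apply/eqP; rewrite -opprD -addr_eq0 addrCA addrA -e2.
    have -> : d l^-1%g = - act (d l) l^-1%g.
      by apply/eqP; rewrite -addr_eq0 addrC -e1.
    by rewrite hadd ?(subsetP sLP) ?groupV // opprD addrAC.
  have uniq x y : C_L L tL0 d x -> C_L L tL0 d y -> x.1 = y.1 -> x = y.
    by case: x y => [l a] [m b] [/= _ ->] [/= _ ->] /= ->.
  have [_ h1 hmul _] := sub.
  have /(abelemP pp) [abL' expL] := abL.
  split=> //.
  - move=> x y Hx Hy; apply: uniq; try exact: hmul.
    by rewrite /ext_mul /=; case: Hx => Hx _; case: Hy => Hy _; exact: (centsP abL' _ Hx _ Hy).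
  - move=> x Hx; apply: uniq; first exact: (@ext_exp_in _ _ _ _ _ _ _ _ sub Hx).
      exact: h1.
    by rewrite ext_exp1 /=; apply: expL; case: Hx.
Qed.

Definition asb (Q : Prop) : bool := if excluded_middle_informative Q then true else false.
Lemma asbE Q : asb Q <-> Q.
Proof. by rewrite /asb; case: excluded_middle_informative. Qed.

Lemma forward (p : nat) (gT : finGroupType) (P : {group gT}) (T : zmodType)
  (act : T -> gT -> T) (rho : gT -> gT -> T) (tL : {group gT} -> gT -> T) (E : Sset gT T) :
  prime p ->
  (forall (t : T) (n : nat), (0 < n)%N -> t *+ n = 0 -> t = 0) ->
  is_right_module act P ->
  is_Z2 act rho P ->
  (forall L : {group gT}, in_calL act rho p P L ->
     complement_T act rho P L (C_L L (tL L) (fun _ => 0))) ->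
  ext_elem_abelian act rho p P E ->
  exists L : {group gT}, in_calL act rho p P L /\
       exists d : gT -> T, is_Z1 act L d /\ E = C_L L (tL L) d.
Proof.
move=> pp tors hm hz hc [sub hcomm hexp].
have [sP h1 hmul hinv] := sub.
have [m1 m2 hadd] := hm.
have [z1 z2 _] := hz.
have r11 : rho 1%g 1%g = 0 by apply: z1; exact: group1.
have uq g t s : E (g, t) -> E (g, s) -> t = s.
  move=> Et Es.
  have Hg : g \in P by exact: (sP _ Et).
  have Hg' : g^-1%g \in P by rewrite groupV.
  have := hmul _ _ Et (hinv _ Es).
  have -> : ext_mul act rho (g, t) (ext_inv act rho (g, s)) = (1%g, act (t - s) g^-1%g).
    rewrite /ext_mul /ext_inv /= mulgV hadd // (actN _ hm) //; congr pair.
    by rewrite addrA subrK.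
  move=> Eu; have := hexp _ Eu; rewrite ext_expT ?m1 //.
  case=> /(tors _ _ (prime_gt0 pp)) e0.
  have : t - s = act (act (t - s) g^-1%g) g by rewrite -m2 // mulVg m1.
  by rewrite e0 (act0 hm) // => /eqP; rewrite subr_eq0 => /eqP.
pose tE g := epsilon (inhabits (0 : T)) (fun t => E (g, t)).
have tEP g : (exists t, E (g, t)) -> E (g, tE g) by apply: epsilon_spec.
pose L0 : {set gT} := [set g | asb (exists t, E (g, t))].
have inL0 g : g \in L0 <-> exists t, E (g, t) by rewrite inE; exact: asbE.
have gs : group_set L0.
  apply/group_setP; split; first by apply/inL0; exists 0.
  move=> x y /inL0 [t Et] /inL0 [s Es]; apply/inL0.
  by eexists; exact: (hmul _ _ Et Es).
pose L := Group gs.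
have inL g : g \in L <-> exists t, E (g, t) by exact: inL0.
have EL g : g \in L -> E (g, tE g) by move/inL/tEP.
have Ex x : E x -> x.2 = tE x.1.
  case: x => g t Et; apply: (uq g) => //; apply: EL; apply/inL; by exists t.
have tE1 : tE 1%g = 0 by symmetry; exact: (Ex _ h1).
have tEm l m : l \in L -> m \in L -> tE (l * m)%g = act (tE l) m + tE m + rho l m.
  by move=> Hl Hm; have /Ex /= <- := hmul _ _ (EL _ Hl) (EL _ Hm).
have sLP : L \subset P by apply/subsetP => g /EL /sP.
have cL : in_calL act rho p P L.
  split=> //.
  - apply/(abelemP pp); split.
      apply/centsP => x Hx y Hy.
      by have /(congr1 fst) := hcomm _ _ (EL _ Hx) (EL _ Hy).
    move=> x Hx; have /(congr1 fst) := hexp _ (EL _ Hx).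
    by rewrite ext_exp1.
  - exists tE; split=> // l m Hl Hm.
    apply/eqP; rewrite eq_sym !subr_eq tEm //; apply/eqP.
    by rewrite (addrC (rho l m) (tE m)) [RHS]addrC addrA.
have [t1 tm] := tL_props (hc _ cL).
exists L; split=> //.
exists (fun g => tE g - tL L g); split.
  split; first by rewrite tE1 t1 subrr.
  move=> l m Hl Hm.
  have Hm' : m \in P by exact: (subsetP sLP).
  rewrite tEm // tm // hadd // (actN _ hm) //.
  rewrite opprD addrACA subrr addr0 opprD addrACA //.
apply: functional_extensionality => x; apply: propositional_extensionality.
split.
  move=> Ex'; split; first by apply/inL; exists x.2; case: x Ex'.
  by rewrite (Ex _ Ex') addrC subrK.
case: x => g t [/= Hg ->]; rewrite addrC subrK; exact: EL.
Qed.

Unset Implicit Arguments.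
Theorem theorem3p1
  (p : nat) (gT : finGroupType) (P : {group gT}) (T : zmodType)
  (act : T -> gT -> T) (rho : gT -> gT -> T)
  (tL : {group gT} -> gT -> T) :
  prime p -> (p.-group P)%g ->
  (* T is torsion-free (as Z_p^d is) *)
  (forall (t : T) (n : nat), (0 < n)%N -> t *+ n = 0 -> t = 0) ->
  is_right_module act P ->
  is_Z2 act rho P ->
  (* for each L in calL, C_L = {(l, t_L(l))} is a fixed complement to T in Lbar *)
  (forall L : {group gT}, in_calL act rho p P L ->
     complement_T act rho P L (C_L L (tL L) (fun _ => 0))) ->
  (* objects of A_p(S) are exactly the C_L(delta), L in calL, delta in Z^1(L,T) *)
  (forall E : Sset gT T,
     ext_elem_abelian act rho p P E <->
     exists L : {group gT}, in_calL act rho p P L /\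
       exists d : gT -> T, is_Z1 act L d /\ E = C_L L (tL L) d)
  /\
  (* and the union of the sets calC(L) is disjoint *)
  (forall (L L' : {group gT}) (d d' : gT -> T),
     in_calL act rho p P L -> in_calL act rho p P L' ->
     is_Z1 act L d -> is_Z1 act L' d' ->
     C_L L (tL L) d = C_L L' (tL L') d' -> L = L').

Proof.
move=> pp pgP tors hm hz hc; split.
  move=> E; split; first exact: forward.
  case=> L [cL [d [zd ->]]]; have [sLP abL _] := cL.
  exact: converse pp hm sLP abL (hc _ cL) zd.
move=> L L' d d' cL cL' _ _ e.
have sub : forall (A B : {group gT}) (a b tA tB : gT -> T),
    C_L A tA a = C_L B tB b -> A \subset B.
  move=> A B a b tA tB e0.
  apply/subsetP => g Hg.
  have : C_L A tA a (g, tA g + a g) by [].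
  by rewrite e0 => -[].
apply/val_inj/eqP; rewrite eqEsubset (sub _ _ _ _ _ _ e) (sub _ _ _ _ _ _ (esym e)) //.
Qed.
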